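(* If the Markov chain $\mathcal{M}$ is started from a connected configuration of particles, then every configuration reached during its execution is connected.
   Context: Let $\Gamma$ be the triangular lattice; a configuration is a finite set of occupied vertices (''locations'') of $\Gamma$, each occupied by one particle; it is connected if the subgraph induced by occupied locations is connected. For a location $\ell$, $N(\ell)$ is the set of particles at locations adjacent to $\ell$. For adjacent $\ell,\ell'$, let $\mathbb{S}=N(\ell)\cap N(\ell')$ and $N(\ell\cup\ell')=(N(\ell)\cup N(\ell'))$ minus particles located at $\ell$ or $\ell'$. Property 1: $|\mathbb{S}|\in\{1,2\}$ and every particle in $N(\ell\cup\ell')$ is connected to a particle of $\mathbb{S}$ by a lattice path all of whose vertices are particles of $N(\ell\cup\ell')$. Property 2: $|\mathbb{S}|=0$; each of $\ell,\ell'$ has at least one adjacent particle other than one located at the other location; the particles of $N(\ell)$ not at $\ell'$ are connected by paths within this set; the particles of $N(\ell')$ not at $\ell$ are connected by paths within this set. One step of $\mathcal{M}$ (bias $\lambda>0$) from $\sigma$: choose a particle $P$ uniformly (location $\ell$), a neighbor $\ell'$ of $\ell$ uniformly among six, and $q$ uniform in $(0,1)$. If $\ell'$ is occupied, do nothing. Otherwise let $t$ (resp. $t'$) be the number of triangular faces incident to $\ell$ (resp. $\ell'$) with all three vertices occupied when $P$ is at $\ell$ (resp. at $\ell'$); move $P$ to $\ell'$ if (1) $\ell$ does not have exactly five occupied neighbors, (2) $\ell,\ell'$ satisfy Property 1 or 2, and (3) $q<\lambda^{t'-t}$; else do nothing. *)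

(* Defs.v *)
(* Triangular lattice in axial coordinates on Z x Z. *)
From Stdlib Require Import Reals ZArith List Bool.
Import ListNotations.
Open Scope Z_scope.

Definition loc := (Z * Z)%type.

Definition loc_add (a b : loc) : loc := (fst a + fst b, snd a + snd b).
Definition loc_eqb (a b : loc) : bool := Z.eqb (fst a) (fst b) && Z.eqb (snd a) (snd b).

Definition d0 : loc := (1, 0).
Definition d1 : loc := (0, 1).
Definition d2 : loc := (-1, 1).
Definition d3 : loc := (-1, 0).
Definition d4 : loc := (0, -1).
Definition d5 : loc := (1, -1).
Definition dirs : list loc := [d0; d1; d2; d3; d4; d5].

(* The six triangular faces incident to a vertex l are {l, l+a, l+b} for
   consecutive directions (a,b). *)
Definition faces : list (loc * loc) :=
  [(d0,d1); (d1,d2); (d2,d3); (d3,d4); (d4,d5); (d5,d0)].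

Definition adj (a b : loc) : Prop := exists d, In d dirs /\ b = loc_add a d.
Definition adjb (a b : loc) : bool := existsb (fun d => loc_eqb (loc_add a d) b) dirs.

(* A configuration: the finite set of occupied locations, given by a list
   (only membership matters). *)
Definition config := list loc.
Definition occ (s : config) (x : loc) : Prop := In x s.
Definition occb (s : config) (x : loc) : bool := existsb (loc_eqb x) s.

Inductive path_in (S : loc -> Prop) : loc -> loc -> Prop :=
| path_refl a : S a -> path_in S a a
| path_step a b c : S a -> adj a b -> path_in S b c -> path_in S a c.

Definition connected (s : config) : Prop :=
  forall a b, occ s a -> occ s b -> path_in (occ s) a b.

Definition Nb (s : config) (l : loc) (x : loc) : Prop := occ s x /\ adj x l.

(* S = N(l) ∩ N(l'), and its cardinality (counted over distinct neighbour locations of l). *)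
Definition Sset (s : config) (l l' : loc) (x : loc) : Prop := Nb s l x /\ Nb s l' x.
Definition Scard (s : config) (l l' : loc) : nat :=
  length (filter (fun d => occb s (loc_add l d) && adjb (loc_add l d) l') dirs).

(* N(l ∪ l') = (N(l) ∪ N(l')) minus particles at l or l'. *)
Definition Nunion (s : config) (l l' : loc) (x : loc) : Prop :=
  (Nb s l x \/ Nb s l' x) /\ x <> l /\ x <> l'.

Definition Property1 (s : config) (l l' : loc) : Prop :=
  (Scard s l l' = 1%nat \/ Scard s l l' = 2%nat) /\
  forall x, Nunion s l l' x -> exists y, Sset s l l' y /\ path_in (Nunion s l l') x y.

Definition Nminus (s : config) (l other : loc) (x : loc) : Prop := Nb s l x /\ x <> other.

Definition Property2 (s : config) (l l' : loc) : Prop :=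
  Scard s l l' = 0%nat /\
  (exists x, Nminus s l l' x) /\
  (exists x, Nminus s l' l x) /\
  (forall x y, Nminus s l l' x -> Nminus s l l' y -> path_in (Nminus s l l') x y) /\
  (forall x y, Nminus s l' l x -> Nminus s l' l y -> path_in (Nminus s l' l) x y).

Definition n_occ_nbrs (s : config) (l : loc) : nat :=
  length (filter (fun d => occb s (loc_add l d)) dirs).

(* Number of triangular faces incident to l with all three vertices occupied
   (l itself being occupied). *)
Definition tri (s : config) (l : loc) : nat :=
  length (filter (fun f => occb s (loc_add l (fst f)) && occb s (loc_add l (snd f))) faces).

Definition move (s : config) (l l' : loc) : config :=
  l' :: filter (fun x => negb (loc_eqb x l)) s.

Definition move_ok (lam : R) (s : config) (l l' : loc) (q : R) : Prop :=
  n_occ_nbrs s l <> 5%nat /\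
  (Property1 s l l' \/ Property2 s l l') /\
  (q < powerRZ lam (Z.of_nat (tri (move s l l') l') - Z.of_nat (tri s l)))%R.

Definition step (lam : R) (s s' : config) : Prop :=
  exists l d q, occ s l /\ In d dirs /\ (0 < q < 1)%R /\
    let l' := loc_add l d in
    ((occ s l' \/ ~ move_ok lam s l l' q) /\ s' = s) \/
    (~ occ s l' /\ move_ok lam s l l' q /\ s' = move s l l').

Inductive reachable (lam : R) (s0 : config) : config -> Prop :=
| reach_refl : reachable lam s0 s0
| reach_step s s' : reachable lam s0 s -> step lam s s' -> reachable lam s0 s'.

(* Main.v *)
Require Import Defs.
From Stdlib Require Import Reals ZArith List Bool Lia.
Import ListNotations.
Open Scope Z_scope.

Lemma loc_eqb_iff (a b : loc) : loc_eqb a b = true <-> a = b.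
Proof.
  destruct a as [a1 a2], b as [b1 b2]; unfold loc_eqb; simpl.
  rewrite andb_true_iff, !Z.eqb_eq. split.
  - intros [-> ->]; reflexivity.
  - intros H; inversion H; auto.
Qed.

Lemma adj_sym a b : adj a b -> adj b a.
Proof.
  intros [d [Hd ->]]. destruct a as [a1 a2].
  simpl in Hd; unfold adj, dirs, loc_add, d0, d1, d2, d3, d4, d5 in *; simpl in *.
  destruct Hd as [<-|[<-|[<-|[<-|[<-|[<-|[]]]]]]].
  - exists (-1, 0); split; [simpl; tauto| simpl; f_equal; ring].
  - exists (0, -1); split; [simpl; tauto| simpl; f_equal; ring].
  - exists (1, -1); split; [simpl; tauto| simpl; f_equal; ring].
  - exists (1, 0); split; [simpl; tauto| simpl; f_equal; ring].
  - exists (0, 1); split; [simpl; tauto| simpl; f_equal; ring].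
  - exists (-1, 1); split; [simpl; tauto| simpl; f_equal; ring].
Qed.

Lemma adj_neq a b : adj a b -> a <> b.
Proof.
  intros [d [Hd ->]]. destruct a as [a1 a2].
  simpl in Hd; unfold dirs, loc_add, d0, d1, d2, d3, d4, d5 in *; simpl in *.
  destruct Hd as [<-|[<-|[<-|[<-|[<-|[<-|[]]]]]]]; simpl; intros H; inversion H; lia.
Qed.

Lemma path_end P a b : path_in P a b -> P b.
Proof. induction 1; auto. Qed.

Lemma path_start P a b : path_in P a b -> P a.
Proof. induction 1; auto. Qed.

Lemma path_mono (P Q : loc -> Prop) a b :
  (forall x, P x -> Q x) -> path_in P a b -> path_in Q a b.
Proof.
  intros HPQ; induction 1.
  - apply path_refl; auto.
  - eapply path_step; eauto.
Qed.

Lemma path_cat P a b c : path_in P a b -> path_in P b c -> path_in P a c.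
Proof.
  induction 1; intros; auto. eapply path_step; eauto.
Qed.

Lemma path_snoc P a b c : path_in P a b -> P c -> adj b c -> path_in P a c.
Proof.
  intros H Hc Hbc. eapply path_cat; [exact H|].
  eapply path_step; [exact (path_end _ _ _ H)| exact Hbc|]. apply path_refl; auto.
Qed.

Lemma path_rev P a b : path_in P a b -> path_in P b a.
Proof.
  induction 1.
  - apply path_refl; auto.
  - eapply path_snoc; eauto. apply adj_sym; auto.
Qed.


Lemma loc_eq_dec (a b : loc) : {a = b} + {a <> b}.
Proof. decide equality; apply Z.eq_dec. Qed.


Lemma first_hit P a l : path_in P a l -> a <> l ->
  exists w, P w /\ adj w l /\ w <> l /\ path_in (fun x => P x /\ x <> l) a w.
Proof.
  induction 1 as [a Ha | a b c Ha Hab Hbc IH]; intros Hne.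
  - congruence.
  - destruct (loc_eq_dec b c) as [Heq|Hne'].
    + subst b. exists a. repeat split; auto. apply path_refl; auto.
    + destruct (IH Hne') as [w [Hw1 [Hw2 [Hw3 Hw4]]]].
      exists w. repeat split; auto. eapply path_step; eauto.
Qed.

Lemma occ_move s l l' x : occ (move s l l') x <-> x = l' \/ (occ s x /\ x <> l).
Proof.
  unfold occ, move; simpl. rewrite filter_In. split.
  - intros [<-|[H1 H2]]; auto. right; split; auto. intros ->.
    assert (loc_eqb l l = true) by (apply loc_eqb_iff; auto).
    rewrite H in H2; discriminate.
  - intros [<-|[H1 H2]]; auto. right; split; auto.
    destruct (loc_eqb x l) eqn:E; auto. apply loc_eqb_iff in E; congruence.
Qed.

Lemma move_connected s l l' :
  connected s -> occ s l -> ~ occ s l' ->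
  (Property1 s l l' \/ Property2 s l l') -> connected (move s l l').
Proof.
  intros Hc Hl Hl' HP.
  set (s' := move s l l').
  assert (Hin : forall x, occ s x -> x <> l -> occ s' x)
    by (intros; apply occ_move; auto).
  assert (Hl's : occ s' l') by (apply occ_move; auto).
  assert (FH : forall a, occ s a -> a <> l ->
     exists w, occ s w /\ adj w l /\ w <> l /\ path_in (occ s') a w).
  { intros a Ha Hne. destruct (first_hit _ _ _ (Hc a l Ha Hl) Hne)
      as [w [H1 [H2 [H3 H4]]]].
    exists w; repeat split; auto. eapply path_mono; [|exact H4].
    intros x [Hx1 Hx2]; auto. }
  assert (Hall : forall a, occ s' a -> path_in (occ s') a l').
  { intros a Ha. apply occ_move in Ha. destruct Ha as [->|[Ha Hne]].
    - apply path_refl; auto.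
    - destruct (FH a Ha Hne) as [w [Hw1 [Hw2 [Hw3 Hw4]]]].
      assert (Hwl' : w <> l') by (intros ->; contradiction).
      destruct HP as [[_ P1] | [_ [_ [[z [[Hz1 Hz2] Hz3]] [P2 _]]]]].
      + destruct (P1 w) as [y [[_ [Hy1 Hy2]] Hy3]].
        { split; [left; split; auto|auto]. }
        pose proof (path_end _ _ _ Hy3) as [_ [Hyl Hyl']].
        eapply path_cat; [exact Hw4|].
        eapply path_snoc; [| exact Hl's | exact Hy2].
        eapply path_mono; [|exact Hy3].
        intros x [[[Hx1 _]|[Hx1 _]] [Hx2 Hx3]]; auto.
      + assert (Hzl' : z <> l') by (intros ->; contradiction).
        destruct (FH z Hz1 Hz3) as [v [Hv1 [Hv2 [Hv3 Hv4]]]].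
        assert (Hvl' : v <> l') by (intros ->; contradiction).
        assert (Pwv : path_in (occ s') w v).
        { eapply path_mono; [|apply P2].
          - intros x [[Hx1 Hx3] Hx2]. apply Hin; auto.
            apply adj_neq; exact Hx3.
          - split; [split; auto|auto].
          - split; [split; auto|auto]. }
        eapply path_cat; [exact Hw4|].
        eapply path_cat; [exact Pwv|].
        eapply path_snoc; [apply path_rev; exact Hv4| exact Hl's| exact Hz2]. }
  intros a b Ha Hb. eapply path_cat; [apply Hall; auto|].
  apply path_rev; apply Hall; auto.
Qed.

Theorem lemma4 (lam : R) (s0 s : config) :
  (0 < lam)%R -> connected s0 -> reachable lam s0 s -> connected s.
Proof.
  intros _ H0 Hr. induction Hr as [|s s' Hr IH Hs]; auto.
  destruct Hs as [l [d [q [Hl [Hd [_ [[_ ->]|[Hn [[_ [HP _]] ->]]]]]]]]]; auto.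
  apply move_connected; auto.
Qed.
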